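(* Let $(U,A)$ and $(V,A)$ be left Hopf algebroids over the same $\Bbbk$-algebra $A$, let $\pi\colon U\to V$ be a surjective morphism of left Hopf algebroids, and let $B$ be its left Hopf kernel. Then: (i) $B$ is an $A$-subring of $U$ with unit map $s_U\colon A\to B$, and its elements commute with $t_U(A)$, i.e. $b\triangleleft a=t_U(a)\,b=b\,t_U(a)=a\blacktriangleright b$ for all $b\in B$, $a\in A$; (ii) the assignment $u\otimes b\mapsto u\rightharpoonup b:=u_+\,b\,u_-$ is a well-defined left $U$-action $U\otimes B\to B$ (landing in $B$), which descends to ${}_\blacktriangleright U_\blacktriangleleft\otimes_{A^e}{}_\triangleright B_\blacktriangleleft\to B$ and satisfies $u\rightharpoonup1_B=s_U(\varepsilon_U(u))$ and $u\rightharpoonup(bb')=(u_{(1)}\rightharpoonup b)(u_{(2)}\rightharpoonup b')$ for all $u\in U$, $b,b'\in B$; thus $B$ is a left $U$-module algebra.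
   Context: A left bialgebroid $(U,A,\Delta,\varepsilon,s,t)$ over a $\Bbbk$-algebra $A$: $\Bbbk$-algebra $U$ with algebra map $s$ and algebra anti-map $t$ from $A$ with commuting images, four commuting $A$-actions $a\blacktriangleright b\triangleright u\triangleleft c\blacktriangleleft d:=t(c)s(b)\,u\,s(d)t(a)$, a coassociative counital unital multiplicative comultiplication $\Delta\colon U\to U_\triangleleft\otimes_A{}_\triangleright U$, $u\mapsto u_{(1)}\otimes u_{(2)}$, landing in the Takeuchi product (where $a\blacktriangleright u_{(1)}\otimes u_{(2)}=u_{(1)}\otimes u_{(2)}\blacktriangleleft a$), with $\Delta(a\blacktriangleright b\triangleright u\triangleleft c\blacktriangleleft d)=(b\triangleright u_{(1)}\blacktriangleleft d)\otimes(a\blacktriangleright u_{(2)}\triangleleft c)$, and counit $\varepsilon\colon U\to A$ with $\varepsilon(b\triangleright u\triangleleft c)=b\varepsilon(u)c$, $\varepsilon(a\blacktriangleright u)=\varepsilon(u\blacktriangleleft a)$, $\varepsilon(uv)=\varepsilon(u\blacktriangleleft\varepsilon(v))$, $s(\varepsilon(u_{(1)}))u_{(2)}=u=t(\varepsilon(u_{(2)}))u_{(1)}$. It is a left Hopf algebroid if $\beta\colon{}_\blacktriangleright U\otimes_{A^{op}}U_\triangleleft\to U_\triangleleft\otimes_A{}_\triangleright U$, $u\otimes v\mapsto u_{(1)}\otimes u_{(2)}v$ is bijective (the domain being $U\otimes U$ modulo $u\,t(a)\otimes v-u\otimes t(a)v$); write $u_+\otimes u_-:=\beta^{-1}(u\otimes1)$.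 A morphism is an algebra map commuting with $\Delta,\varepsilon,s,t$. The left Hopf kernel of surjective $\pi$ is $B=\{u\in U: u_{(1)}\otimes_A\pi(u_{(2)})=u\otimes_A1_V\}$. *)

(* Defs.v *)
(* Left bialgebroids / left Hopf algebroids, encoded with
   Sweedler-style representatives (finite lists of pairs) of elements of
   tensor products; equality in a tensor product X_ra (x)_A la_Y is encoded by
   its universal property (equal images under every A-balanced biadditive map
   into an arbitrary abelian group). *)
From HB Require Import structures.
From mathcomp Require Import all_boot all_algebra.
From Stdlib Require Import ClassicalEpsilon.
Set Implicit Arguments. Unset Strict Implicit. Unset Printing Implicit Defensive.
Import GRing.Theory.
Local Open Scope ring_scope.

Definition tsum (X Y : Type) (M : zmodType) (f : X -> Y -> M) (l : seq (X * Y)) : M :=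
  \sum_(p <- l) f p.1 p.2.

Definition balanced2 (A : Type) (X Y M : zmodType)
  (ra : X -> A -> X) (la : A -> Y -> Y) (f : X -> Y -> M) : Prop :=
  [/\ forall x y1 y2, f x (y1 + y2) = f x y1 + f x y2,
      forall x1 x2 y, f (x1 + x2) y = f x1 y + f x2 y &
      forall x a y, f (ra x a) y = f x (la a y)].

(* l1 and l2 represent the same element of X (x)_A Y *)
Definition teq2 (A : Type) (X Y : zmodType)
  (ra : X -> A -> X) (la : A -> Y -> Y) (l1 l2 : seq (X * Y)) : Prop :=
  forall (M : zmodType) (f : X -> Y -> M), balanced2 ra la f -> tsum f l1 = tsum f l2.

Definition tsum3 (X Y Z : Type) (M : zmodType) (f : X -> Y -> Z -> M)
  (l : seq (X * Y * Z)) : M := \sum_(p <- l) f p.1.1 p.1.2 p.2.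

Definition balanced3 (A : Type) (X Y Z M : zmodType)
  (ra1 : X -> A -> X) (la1 : A -> Y -> Y) (ra2 : Y -> A -> Y) (la2 : A -> Z -> Z)
  (f : X -> Y -> Z -> M) : Prop :=
  [/\ forall x1 x2 y z, f (x1 + x2) y z = f x1 y z + f x2 y z,
      forall x y1 y2 z, f x (y1 + y2) z = f x y1 z + f x y2 z,
      forall x y z1 z2, f x y (z1 + z2) = f x y z1 + f x y z2,
      forall x a y z, f (ra1 x a) y z = f x (la1 a y) z &
      forall x y a z, f x (ra2 y a) z = f x y (la2 a z)].

Definition teq3 (A : Type) (X Y Z : zmodType)
  (ra1 : X -> A -> X) (la1 : A -> Y -> Y) (ra2 : Y -> A -> Y) (la2 : A -> Z -> Z)
  (l1 l2 : seq (X * Y * Z)) : Prop :=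
  forall (M : zmodType) (f : X -> Y -> Z -> M),
    balanced3 ra1 la1 ra2 la2 f -> tsum3 f l1 = tsum3 f l2.

Section Bialgebroid.
Variables (k : comNzRingType) (A U : algType k).
Variables (s t : A -> U) (D : U -> seq (U * U)) (e : U -> A).

(* the four actions: a |> b > u < c <| d := t(c) s(b) u s(d) t(a) *)
(* U_< (x)_A >U : t(a) x (x) y = x (x) s(a) y *)
Definition teqL (l1 l2 : seq (U * U)) : Prop :=
  teq2 (fun x a => t a * x) (fun a y => s a * y) l1 l2.

(* |>U (x)_{A^op} U_< : x t(a) (x) y = x (x) t(a) y *)
Definition teqop (l1 l2 : seq (U * U)) : Prop :=
  teq2 (fun x a => x * t a) (fun a y => t a * y) l1 l2.

(* U_< (x)_A >U_< (x)_A >U *)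
Definition teqL3 (l1 l2 : seq (U * U * U)) : Prop :=
  teq3 (fun x a => t a * x) (fun a y => s a * y)
       (fun y a => t a * y) (fun a z => s a * z) l1 l2.

Definition Dl (l : seq (U * U)) : seq (U * U * U) :=
  flatten [seq [seq (q.1, q.2, p.2) | q <- D p.1] | p <- l].
Definition Dr (l : seq (U * U)) : seq (U * U * U) :=
  flatten [seq [seq (p.1, q.1, q.2) | q <- D p.2] | p <- l].

(* product in the Takeuchi product, on representatives *)
Definition tmul (l1 l2 : seq (U * U)) : seq (U * U) :=
  flatten [seq [seq (p.1 * q.1, p.2 * q.2) | q <- l2] | p <- l1].

Record is_left_bialgebroid : Prop := {
  s_add : forall a b, s (a + b) = s a + s b;
  s_scale : forall (c : k) a, s (c *: a) = c *: s a;
  s_mul : forall a b, s (a * b) = s a * s b;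
  s_one : s 1 = 1;
  t_add : forall a b, t (a + b) = t a + t b;
  t_scale : forall (c : k) a, t (c *: a) = c *: t a;
  t_mul : forall a b, t (a * b) = t b * t a;
  t_one : t 1 = 1;
  st_comm : forall a b, s a * t b = t b * s a;
  D_add : forall u v, teqL (D (u + v)) (D u ++ D v);
  D_scale : forall (c : k) u, teqL (D (c *: u)) [seq (c *: p.1, p.2) | p <- D u];
  D_takeuchi : forall u a,
      teqL [seq (p.1 * t a, p.2) | p <- D u] [seq (p.1, p.2 * s a) | p <- D u];
  D_actions : forall a b c d u,
      teqL (D (t c * s b * u * s d * t a))
           [seq (s b * p.1 * s d, t c * p.2 * t a) | p <- D u];
  D_coass : forall u, teqL3 (Dl (D u)) (Dr (D u));
  D_one : teqL (D 1) [:: (1, 1)];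
  D_mul : forall u v, teqL (D (u * v)) (tmul (D u) (D v));
  e_add : forall u v, e (u + v) = e u + e v;
  e_scale : forall (c : k) u, e (c *: u) = c *: e u;
  e_lin : forall b c u, e (t c * s b * u) = b * e u * c;
  e_bal : forall a u, e (u * t a) = e (u * s a);
  e_mul : forall u v, e (u * v) = e (u * s (e v));
  e_counitl : forall u, \sum_(p <- D u) s (e p.1) * p.2 = u;
  e_counitr : forall u, \sum_(p <- D u) t (e p.2) * p.1 = u
}.

(* Galois map beta : |>U (x)_{A^op} U_< -> U_< (x)_A >U, u (x) v |-> u(1) (x) u(2) v *)
Definition galois_map (l : seq (U * U)) : seq (U * U) :=
  flatten [seq [seq (q.1, q.2 * p.2) | q <- D p.1] | p <- l].

Definition is_left_hopf_algebroid : Prop :=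
  [/\ is_left_bialgebroid,
      (forall l1 l2, teqL (galois_map l1) (galois_map l2) -> teqop l1 l2) &
      (forall m, exists l, teqL (galois_map l) m)].

(* a representative of u_+ (x) u_- := beta^{-1}(u (x) 1) *)
Definition transl (u : U) : seq (U * U) :=
  epsilon (inhabits [::]) (fun l => teqL (galois_map l) [:: (u, 1)]).

Definition hact (u b : U) : U := \sum_(p <- transl u) p.1 * b * p.2.

End Bialgebroid.

Section Morphism.
Variables (k : comNzRingType) (A U V : algType k).
Variables (sU tU : A -> U) (DU : U -> seq (U * U)) (eU : U -> A).
Variables (sV tV : A -> V) (DV : V -> seq (V * V)) (eV : V -> A).
Variable pi : U -> V.

Definition is_bialgebroid_morphism : Prop :=
  [/\ [/\ forall u v, pi (u + v) = pi u + pi v,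
          forall (c : k) u, pi (c *: u) = c *: pi u,
          forall u v, pi (u * v) = pi u * pi v &
          pi 1 = 1],
      forall a, pi (sU a) = sV a,
      forall a, pi (tU a) = tV a,
      forall u, eV (pi u) = eU u &
      forall u, teqL sV tV (DV (pi u)) [seq (pi p.1, pi p.2) | p <- DU u]].

(* left Hopf kernel: u(1) (x)_A pi(u(2)) = u (x)_A 1_V in U_< (x)_A >V *)
Definition left_hopf_kernel (u : U) : Prop :=
  teq2 (fun (x : U) a => tU a * x) (fun a (y : V) => sV a * y)
       [seq (p.1, pi p.2) | p <- DU u] [:: (u, 1)].

End Morphism.

(* Main.v *)
Require Import Defs.
From HB Require Import structures.
From mathcomp Require Import all_boot all_algebra.
From Stdlib Require Import ClassicalEpsilon.
Set Implicit Arguments. Unset Strict Implicit. Unset Printing Implicit Defensive.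
Import GRing.Theory.
Local Open Scope ring_scope.


Section Additive.
Variables (Y M : zmodType) (g : Y -> M).
Hypothesis ga : forall y1 y2, g (y1 + y2) = g y1 + g y2.
Lemma ga0 : g 0 = 0.
Proof. by apply/(addrI (g 0)); rewrite -ga !addr0. Qed.
Lemma gaN y : g (- y) = - g y.
Proof. by apply/(addrI (g y)); rewrite -ga !subrr ga0. Qed.
Lemma gaB y1 y2 : g (y1 - y2) = g y1 - g y2.
Proof. by rewrite ga gaN. Qed.
Lemma ga_sum (I : Type) (r : seq I) (F : I -> Y) :
  g (\sum_(i <- r) F i) = \sum_(i <- r) g (F i).
Proof. exact: (big_morph g ga ga0). Qed.
End Additive.

Section Bialg.
Variables (k : comNzRingType) (A U : algType k).
Variables (s t : A -> U) (D : U -> seq (U * U)) (e : U -> A).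
Hypothesis HB : is_left_bialgebroid s t D e.

Definition balL (M : zmodType) (f : U -> U -> M) :=
  balanced2 (fun x a => t a * x) (fun a y => s a * y) f.
Definition balop (M : zmodType) (f : U -> U -> M) :=
  balanced2 (fun x a => x * t a) (fun a y => t a * y) f.
Definition balL3 (M : zmodType) (F : U -> U -> U -> M) :=
  balanced3 (fun x a => t a * x) (fun a y => s a * y)
            (fun y a => t a * y) (fun a z => s a * z) F.

Lemma s1 : s 1 = 1. Proof. exact: s_one HB. Qed.
Lemma t1 : t 1 = 1. Proof. exact: t_one HB. Qed.

Section F.
Variables (M : zmodType) (f : U -> U -> M).
Hypothesis hf : balL f.

Lemma fL1 x1 x2 y : f (x1 + x2) y = f x1 y + f x2 y.
Proof. by case: hf. Qed.
Lemma fL2 x y1 y2 : f x (y1 + y2) = f x y1 + f x y2.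
Proof. by case: hf. Qed.
Lemma fLb a x y : f (t a * x) y = f x (s a * y).
Proof. by case: hf. Qed.

Lemma Dadd u v : \sum_(q <- D (u + v)) f q.1 q.2 =
   \sum_(q <- D u) f q.1 q.2 + \sum_(q <- D v) f q.1 q.2.
Proof. by have := D_add HB u v hf; rewrite /tsum big_cat. Qed.

Lemma D0 : \sum_(q <- D 0) f q.1 q.2 = 0.
Proof. have h := Dadd 0 0; rewrite addr0 in h. by apply/(addrI (\sum_(q <- D 0) f q.1 q.2)); rewrite -h addr0. Qed.

Lemma Dsub u v : \sum_(q <- D (u - v)) f q.1 q.2 =
   \sum_(q <- D u) f q.1 q.2 - \sum_(q <- D v) f q.1 q.2.
Proof. by have := Dadd (u - v) v; rewrite subrK => ->; rewrite addrK. Qed.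

Lemma Dsum (I : Type) (r : seq I) (F : I -> U) :
  \sum_(q <- D (\sum_(i <- r) F i)) f q.1 q.2 =
  \sum_(i <- r) \sum_(q <- D (F i)) f q.1 q.2.
Proof. elim: r => [|i r IH]; first by rewrite !big_nil D0. by rewrite !big_cons Dadd IH. Qed.

Lemma Dscale (c : k) u : \sum_(q <- D (c *: u)) f q.1 q.2 =
   \sum_(q <- D u) f (c *: q.1) q.2.
Proof. by have := D_scale HB c u hf; rewrite /tsum big_map. Qed.

Lemma Dact a b c d u :
  \sum_(q <- D (t c * s b * u * s d * t a)) f q.1 q.2 =
  \sum_(q <- D u) f (s b * q.1 * s d) (t c * q.2 * t a).
Proof. by have := D_actions HB a b c d u hf; rewrite /tsum big_map. Qed.

Lemma Dsl a u : \sum_(q <- D (s a * u)) f q.1 q.2 = \sum_(q <- D u) f (s a * q.1) q.2.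
Proof.
have := Dact 1 a 1 1 u; rewrite s1 t1 ?mulr1 ?mul1r => ->.
by apply: eq_bigr => q _; rewrite ?mulr1 ?mul1r.
Qed.
Lemma Dsr a u : \sum_(q <- D (u * s a)) f q.1 q.2 = \sum_(q <- D u) f (q.1 * s a) q.2.
Proof.
have := Dact 1 1 1 a u; rewrite s1 t1 ?mulr1 ?mul1r => ->.
by apply: eq_bigr => q _; rewrite ?mulr1 ?mul1r.
Qed.
Lemma Dtl a u : \sum_(q <- D (t a * u)) f q.1 q.2 = \sum_(q <- D u) f q.1 (t a * q.2).
Proof.
have := Dact 1 1 a 1 u; rewrite s1 t1 ?mulr1 ?mul1r => ->.
by apply: eq_bigr => q _; rewrite ?mulr1 ?mul1r.
Qed.
Lemma Dtr a u : \sum_(q <- D (u * t a)) f q.1 q.2 = \sum_(q <- D u) f q.1 (q.2 * t a).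
Proof.
have := Dact a 1 1 1 u; rewrite s1 t1 ?mulr1 ?mul1r => ->.
by apply: eq_bigr => q _; rewrite ?mulr1 ?mul1r.
Qed.

Lemma Dtak a u : \sum_(q <- D u) f (q.1 * t a) q.2 = \sum_(q <- D u) f q.1 (q.2 * s a).
Proof. by have := D_takeuchi HB u a hf; rewrite /tsum !big_map. Qed.

Lemma Dmul u v : \sum_(q <- D (u * v)) f q.1 q.2 =
  \sum_(p <- D u) \sum_(q <- D v) f (p.1 * q.1) (p.2 * q.2).
Proof. have := D_mul HB u v hf; rewrite /tsum /tmul big_flatten /= => ->.
rewrite big_map. apply: eq_bigr => p _. by rewrite big_map. Qed.

Lemma Done : \sum_(q <- D 1) f q.1 q.2 = f 1 1.
Proof. by have := D_one HB hf; rewrite /tsum big_cons big_nil addr0. Qed.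
End F.

Lemma coass (M : zmodType) (F : U -> U -> U -> M) u : balL3 F ->
  \sum_(p <- D u) \sum_(q <- D p.1) F q.1 q.2 p.2 =
  \sum_(p <- D u) \sum_(q <- D p.2) F p.1 q.1 q.2.
Proof.
move=> hF; have := D_coass HB u hF.
rewrite /tsum3 /Dl /Dr !big_flatten /= !big_map => h.
transitivity (\sum_(p <- D u) \sum_(i <- [seq (q.1, q.2, p.2) | q <- D p.1]) F i.1.1 i.1.2 i.2).
  by apply: eq_bigr => p _; rewrite big_map.
rewrite h; apply: eq_bigr => p _; by rewrite big_map.
Qed.

Lemma counitl u : \sum_(p <- D u) s (e p.1) * p.2 = u.
Proof. exact: e_counitl HB u. Qed.
Lemma counitr u : \sum_(p <- D u) t (e p.2) * p.1 = u.
Proof. exact: e_counitr HB u. Qed.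

End Bialg.


Lemma sum_fm (M : zmodType) (X I J : Type) (F : X -> M) (r : seq I) (h : I -> seq J)
  (G : I -> J -> X) :
  \sum_(x <- flatten [seq [seq G i j | j <- h i] | i <- r]) F x =
  \sum_(i <- r) \sum_(j <- h i) F (G i j).
Proof. rewrite big_flatten big_map; apply: eq_bigr => i _; by rewrite big_map. Qed.

Section Hopf.
Variables (k : comNzRingType) (A U : algType k).
Variables (s t : A -> U) (D : U -> seq (U * U)) (e : U -> A).
Hypothesis HB : is_left_bialgebroid s t D e.
Hypothesis Hinj : forall l1 l2, teqL s t (galois_map D l1) (galois_map D l2) -> teqop t l1 l2.
Hypothesis Hsurj : forall m, exists l, teqL s t (galois_map D l) m.

Local Notation T := (transl s t D).
Local Notation balL := (balL s t).
Local Notation balop := (balop t).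

Lemma Tspec u : teqL s t (galois_map D (T u)) [:: (u, 1)].
Proof. exact: (epsilon_spec _ (fun l => teqL s t (galois_map D l) [:: (u, 1)]) (Hsurj _)). Qed.

Lemma gmE (M : zmodType) (f : U -> U -> M) l : tsum f (galois_map D l) =
  \sum_(p <- l) \sum_(q <- D p.1) f q.1 (q.2 * p.2).
Proof. by rewrite /tsum /galois_map sum_fm. Qed.

Lemma TS (M : zmodType) (f : U -> U -> M) : balL f -> forall u,
  \sum_(p <- T u) \sum_(q <- D p.1) f q.1 (q.2 * p.2) = f u 1.
Proof. move=> hf u; have := Tspec u hf; by rewrite gmE /tsum big_seq1. Qed.

Lemma balL_r (M : zmodType) (f : U -> U -> M) z : balL f -> balL (fun x y => f x (y * z)).
Proof.
move=> hf; split => [x y1 y2|x1 x2 y|a x y]; first by rewrite mulrDl (fL2 hf).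
  by rewrite (fL1 hf).
by rewrite (fLb hf) mulrA.
Qed.

Lemma TSz (M : zmodType) (f : U -> U -> M) : balL f -> forall u z,
  \sum_(p <- T u) \sum_(q <- D p.1) f q.1 (q.2 * (p.2 * z)) = f u z.
Proof.
move=> hf u z; have := TS (balL_r z hf) u; rewrite mul1r => <-.
apply: eq_bigr => p _; apply: eq_bigr => q _; by rewrite mulrA.
Qed.

Lemma INJ l1 l2 :
  (forall (M : zmodType) (f : U -> U -> M), balL f ->
    \sum_(p <- l1) \sum_(q <- D p.1) f q.1 (q.2 * p.2) =
    \sum_(p <- l2) \sum_(q <- D p.1) f q.1 (q.2 * p.2)) ->
  forall (M : zmodType) (g : U -> U -> M), balop g ->
    \sum_(p <- l1) g p.1 p.2 = \sum_(p <- l2) g p.1 p.2.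
Proof. move=> h M g hg; apply: (Hinj _ hg) => M' f hf; rewrite !gmE; exact: h. Qed.


Section Bal.
Variables (M : zmodType) (f : U -> U -> M).
Hypothesis hf : balL f.
Lemma balL_sl a : balL (fun x y => f (s a * x) y).
Proof.
split => [x y1 y2|x1 x2 y|c x y]; first by rewrite (fL2 hf).
  by rewrite mulrDr (fL1 hf).
by rewrite mulrA (st_comm HB) -mulrA (fLb hf).
Qed.
Lemma balL_lr w : balL (fun x y => f (x * w) y).
Proof.
split => [x y1 y2|x1 x2 y|c x y]; first by rewrite (fL2 hf).
  by rewrite mulrDl (fL1 hf).
by rewrite -mulrA (fLb hf).
Qed.
Lemma balL_tl a : balL (fun x y => f x (t a * y)).
Proof.
split => [x y1 y2|x1 x2 y|c x y]; first by rewrite mulrDr (fL2 hf).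
  by rewrite (fL1 hf).
by rewrite (fLb hf) !mulrA (st_comm HB).
Qed.
End Bal.

Section Gop.
Variables (M : zmodType) (g : U -> U -> M).
Hypothesis hg : balop g.
Lemma gO1 x1 x2 y : g (x1 + x2) y = g x1 y + g x2 y.
Proof. by case: hg. Qed.
Lemma gO2 x y1 y2 : g x (y1 + y2) = g x y1 + g x y2.
Proof. by case: hg. Qed.
Lemma gOb a x y : g (x * t a) y = g x (t a * y).
Proof. by case: hg. Qed.

Lemma K y z : \sum_(r <- D y) \sum_(p <- T r.1) g p.1 (p.2 * (r.2 * z)) = g y z.
Proof.
have := INJ (l1 := flatten [seq [seq (p.1, p.2 * (r.2 * z)) | p <- T r.1] | r <- D y])
  (l2 := [:: (y, z)]) _ hg.
rewrite sum_fm big_seq1 => -> // M' f hf; rewrite sum_fm big_seq1 /=.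
apply: eq_bigr => r _; exact: TSz.
Qed.

Lemma T_add x y : \sum_(p <- T (x + y)) g p.1 p.2 =
  \sum_(p <- T x) g p.1 p.2 + \sum_(p <- T y) g p.1 p.2.
Proof.
have := INJ (l1 := T (x + y)) (l2 := T x ++ T y) _ hg.
rewrite big_cat => -> // M' f hf; by rewrite big_cat !TS // (fL1 hf).
Qed.

Lemma T_sl a x : \sum_(p <- T (s a * x)) g p.1 p.2 = \sum_(p <- T x) g (s a * p.1) p.2.
Proof.
have := INJ (l1 := T (s a * x)) (l2 := [seq (s a * p.1, p.2) | p <- T x]) _ hg.
rewrite big_map => -> // M' f hf; rewrite big_map /= TS //.
transitivity (\sum_(p <- T x) \sum_(q <- D p.1) f (s a * q.1) (q.2 * p.2)).
  by rewrite (TS (balL_sl hf a)).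
apply: eq_bigr => p _; symmetry; exact: (Dsl HB (balL_r p.2 hf)).
Qed.

Lemma T_sr a x : \sum_(p <- T (x * s a)) g p.1 p.2 = \sum_(p <- T x) g (p.1 * s a) p.2.
Proof.
have := INJ (l1 := T (x * s a)) (l2 := [seq (p.1 * s a, p.2) | p <- T x]) _ hg.
rewrite big_map => -> // M' f hf; rewrite big_map /= TS //.
transitivity (\sum_(p <- T x) \sum_(q <- D p.1) f (q.1 * s a) (q.2 * p.2)).
  by rewrite (TS (balL_lr hf (s a))).
apply: eq_bigr => p _; symmetry; exact: (Dsr HB (balL_r p.2 hf)).
Qed.

Lemma T_tl a x : \sum_(p <- T (t a * x)) g p.1 p.2 = \sum_(p <- T x) g p.1 (p.2 * s a).
Proof.
have := INJ (l1 := T (t a * x)) (l2 := [seq (p.1, p.2 * s a) | p <- T x]) _ hg.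
rewrite big_map => -> // M' f hf; rewrite big_map /= TS // (fLb hf) mulr1.
by rewrite -(TSz hf).
Qed.

Lemma T_tr a x : \sum_(p <- T (x * t a)) g p.1 p.2 = \sum_(p <- T x) g p.1 (s a * p.2).
Proof.
have := INJ (l1 := T (x * t a)) (l2 := [seq (p.1, s a * p.2) | p <- T x]) _ hg.
rewrite big_map => -> // M' f hf; rewrite big_map /= TS //.
transitivity (\sum_(p <- T x) \sum_(q <- D p.1) f (q.1 * t a) (q.2 * p.2)).
  by rewrite (TS (balL_lr hf (t a))).
apply: eq_bigr => p _.
transitivity (\sum_(q <- D p.1) f q.1 (q.2 * s a * p.2)); first exact: (Dtak HB (balL_r p.2 hf)).
by apply: eq_bigr => q _; rewrite mulrA.
Qed.

Lemma T_tak a x : \sum_(p <- T x) g p.1 (p.2 * t a) = \sum_(p <- T x) g (t a * p.1) p.2.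
Proof.
have := INJ (l1 := [seq (p.1, p.2 * t a) | p <- T x]) (l2 := [seq (t a * p.1, p.2) | p <- T x]) _ hg.
rewrite !big_map => -> // M' f hf; rewrite !big_map /=.
transitivity (f x (t a)); first exact: TSz.
transitivity (\sum_(p <- T x) \sum_(q <- D p.1) f q.1 (t a * (q.2 * p.2))).
  by rewrite (TS (balL_tl hf a)) mulr1.
apply: eq_bigr => p _; symmetry.
transitivity (\sum_(q <- D p.1) f q.1 (t a * q.2 * p.2)).
  exact: (Dtl HB (balL_r p.2 hf)).
by apply: eq_bigr => q _; rewrite mulrA.
Qed.

Lemma T_one : \sum_(p <- T 1) g p.1 p.2 = g 1 1.
Proof.
have := INJ (l1 := T 1) (l2 := [:: (1, 1)]) _ hg.
rewrite big_seq1 => -> // M' f hf; rewrite big_seq1 TS //=.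
by rewrite (Done HB (balL_r 1 hf)) mulr1.
Qed.

Lemma T_scale (c : k) x : \sum_(p <- T (c *: x)) g p.1 p.2 = \sum_(p <- T x) g (c *: p.1) p.2.
Proof.
have := INJ (l1 := T (c *: x)) (l2 := [seq (c *: p.1, p.2) | p <- T x]) _ hg.
rewrite big_map => -> // M' f hf; rewrite big_map /= TS //.
have hf' : balL (fun x y => f (c *: x) y).
  split => [x0 y1 y2|x1 x2 y|a x0 y]; first by rewrite (fL2 hf).
    by rewrite scalerDr (fL1 hf).
  by rewrite scalerAr (fLb hf).
transitivity (\sum_(p <- T x) \sum_(q <- D p.1) f (c *: q.1) (q.2 * p.2)).
  by rewrite (TS hf').
apply: eq_bigr => p _; symmetry; exact: (Dscale HB (balL_r p.2 hf)).
Qed.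


Lemma T_mul x y : \sum_(p <- T (x * y)) g p.1 p.2 =
  \sum_(p <- T x) \sum_(q <- T y) g (p.1 * q.1) (q.2 * p.2).
Proof.
have := INJ (l1 := T (x * y))
  (l2 := flatten [seq [seq (p.1 * q.1, q.2 * p.2) | q <- T y] | p <- T x]) _ hg.
rewrite sum_fm => -> // M' f hf; rewrite sum_fm /= TS //.
pose Phi (p : U * U) (x' y' : U) := \sum_(r <- D p.1) f (r.1 * x') (r.2 * (y' * p.2)).
have hPhi : forall p, balL (Phi p).
  move=> p; split => [x' y1 y2|x1 x2 y'|x' a y']; rewrite /Phi.
  - by rewrite -big_split; apply: eq_bigr => r _; rewrite mulrDl mulrDr (fL2 hf).
  - by rewrite -big_split; apply: eq_bigr => r _; rewrite mulrDr (fL1 hf).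
  have := Dtak HB (balL_r (y' * p.2) (balL_lr hf x')) a p.1 => /= h.
  transitivity (\sum_(q <- D p.1) f (q.1 * t a * x') (q.2 * (y' * p.2))).
    by apply: eq_bigr => r _; rewrite mulrA.
  rewrite h; apply: eq_bigr => r _; by rewrite !mulrA.
transitivity (\sum_(p <- T x) Phi p y 1).
  rewrite /Phi; have := TS (balL_lr hf y) x => <-.
  by apply: eq_bigr => p _; apply: eq_bigr => r _; rewrite mul1r.
apply: eq_bigr => p _; rewrite -(TS (hPhi p) y).
apply: eq_bigr => q _.
transitivity (\sum_(c <- D q.1) \sum_(r <- D p.1) f (r.1 * c.1) (r.2 * (c.2 * q.2 * p.2))).
  by apply: eq_bigr => c _; apply: eq_bigr => r _; rewrite mulrA.
rewrite (Dmul HB (balL_r (q.2 * p.2) hf)) /= exchange_big /=.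
apply: eq_bigr => r _; apply: eq_bigr => c _; by rewrite !mulrA.
Qed.

End Gop.

Lemma T_eps x : \sum_(p <- T x) p.1 * p.2 = s (e x).
Proof.
have hf : balL (fun a b => s (e a) * b).
  split => [x0 y1 y2|x1 x2 y|x0 a y]; first by rewrite mulrDr.
    by rewrite (e_add HB) (s_add HB) mulrDl.
  have := e_lin HB 1 a x0; rewrite (s_one HB) mulr1 mul1r => ->.
  by rewrite (s_mul HB) mulrA.
have := TS hf x; rewrite mulr1 => <-.
apply: eq_bigr => p _; rewrite -{1}(counitl HB p.1) mulr_suml.
by apply: eq_bigr => q _; rewrite mulrA.
Qed.


Section Tri.
Variables (M : zmodType) (F : U -> U -> U -> M).
Hypothesis F1 : forall x1 x2 y z, F (x1 + x2) y z = F x1 y z + F x2 y z.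
Hypothesis F2 : forall x y1 y2 z, F x (y1 + y2) z = F x y1 z + F x y2 z.
Hypothesis F3 : forall x y z1 z2, F x y (z1 + z2) = F x y z1 + F x y z2.

Section IVs.
Hypothesis Fa : forall a x y z, F (t a * x) y z = F x (s a * y) z.
Hypothesis Fb : forall a x y z, F x (y * t a) z = F x y (t a * z).

Lemma IV u : \sum_(w <- T u) \sum_(c <- D w.1) F c.1 c.2 w.2 =
  \sum_(r <- D u) \sum_(q <- T r.2) F r.1 q.1 q.2.
Proof.
pose H x y z := \sum_(p <- T y) F x p.1 (p.2 * z).
have hgx : forall x, balop (F x).
  by move=> x; split => [y z1 z2|y1 y2 z|y a z]; [apply: F3|apply: F2|apply: Fb].
have hgz : forall x z, balop (fun a b => F x a (b * z)).
  move=> x z; split => [y z1 z2|y1 y2 z'|y a z']; first by rewrite mulrDl F3.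
    by rewrite F2.
  by rewrite Fb mulrA.
have h0 : forall x y z, F x y z = \sum_(c <- D y) H x c.1 (c.2 * z).
  by move=> x y z; rewrite -(K (hgx x) y z).
have H1 : forall x1 x2 y z, H (x1 + x2) y z = H x1 y z + H x2 y z.
  by move=> *; rewrite /H -big_split; apply: eq_bigr => p _; rewrite F1.
have H2 : forall x y1 y2 z, H x (y1 + y2) z = H x y1 z + H x y2 z.
  by move=> x y1 y2 z; rewrite /H (T_add (hgz x z)).
have H3 : forall x y z1 z2, H x y (z1 + z2) = H x y z1 + H x y z2.
  by move=> *; rewrite /H -big_split; apply: eq_bigr => p _; rewrite mulrDr F3.
have Hsl : forall a x y z, H (t a * x) y z = H x (s a * y) z.
  move=> a x y z; rewrite /H (T_sl (hgz x z)).
  by apply: eq_bigr => p _; rewrite Fa.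
have Htl : forall a x y z, H x (t a * y) z = H x y (s a * z).
  move=> a x y z; rewrite /H (T_tl (hgz x z)).
  by apply: eq_bigr => p _; rewrite mulrA.
pose K3 w (a b c : U) := H a b (c * w).
have hK3 : forall w, balL3 s t (K3 w).
  move=> w; split; rewrite /K3.
  - by move=> *; rewrite H1.
  - by move=> *; rewrite H2.
  - by move=> *; rewrite mulrDl H3.
  - by move=> *; rewrite Hsl.
  - by move=> *; rewrite Htl mulrA.
pose Phi x y := \sum_(d <- D x) H d.1 d.2 y.
have hPhi : balL Phi.
  have hb : forall y, balL (fun a b => H a b y).
    by move=> y; split => [x y1 y2|x1 x2 y'|x a y']; [rewrite H2|rewrite H1|rewrite Hsl].
  split => [x y1 y2|x1 x2 y|x a y]; rewrite /Phi.
  - by rewrite -big_split; apply: eq_bigr => d _; rewrite H3.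
  - exact: (Dadd HB (hb y)).
  rewrite (Dtl HB (hb y)); apply: eq_bigr => d _; by rewrite Htl.
transitivity (\sum_(w <- T u) \sum_(c <- D w.1) Phi c.1 (c.2 * w.2)).
  apply: eq_bigr => w0 _.
  transitivity (\sum_(c <- D w0.1) \sum_(d <- D c.2) K3 w0.2 c.1 d.1 d.2).
    by apply: eq_bigr => c _; rewrite h0; apply: eq_bigr => d _; rewrite /K3.
  by rewrite -(coass HB _ (hK3 w0.2)).
rewrite (TS hPhi) /Phi; apply: eq_bigr => d _; by rewrite /H; under eq_bigr do rewrite mulr1.
Qed.
End IVs.

Section Vs.
Hypothesis Fa : forall a x y z, F (x * t a) y z = F x y (t a * z).
Hypothesis Fb : forall a x y z, F x (t a * y) z = F x y (s a * z).

Lemma V5 u : \sum_(w <- T u) \sum_(q <- D w.2) F w.1 q.1 q.2 =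
  \sum_(w <- T u) \sum_(p <- T w.1) F p.1 w.2 p.2.
Proof.
pose H x y z := \sum_(p <- T x) F p.1 y (p.2 * z).
have hgy : forall y, balop (fun a b => F a y b).
  by move=> y; split => [x z1 z2|x1 x2 z|x a z]; [apply: F3|apply: F1|apply: Fa].
have hgyz : forall y z, balop (fun a b => F a y (b * z)).
  move=> y z; split => [x z1 z2|x1 x2 z'|x a z']; first by rewrite mulrDl F3.
    by rewrite F1.
  by rewrite Fa mulrA.
have h0 : forall x y z, F x y z = \sum_(r <- D x) H r.1 y (r.2 * z).
  by move=> x y z; rewrite -(K (hgy y) x z).
have H1 : forall x1 x2 y z, H (x1 + x2) y z = H x1 y z + H x2 y z.
  by move=> x1 x2 y z; rewrite /H (T_add (hgyz y z)).
have H2 : forall x y1 y2 z, H x (y1 + y2) z = H x y1 z + H x y2 z.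
  by move=> *; rewrite /H -big_split; apply: eq_bigr => p _; rewrite F2.
have H3 : forall x y z1 z2, H x y (z1 + z2) = H x y z1 + H x y z2.
  by move=> *; rewrite /H -big_split; apply: eq_bigr => p _; rewrite mulrDr F3.
have h1 : forall a x y z, H (t a * x) y z = H x y (s a * z).
  move=> a x y z; rewrite /H (T_tl (hgyz y z)).
  by apply: eq_bigr => p _; rewrite mulrA.
have h3 : forall a x y z, H (x * t a) y z = H x (t a * y) z.
  move=> a x y z; rewrite /H (T_tr (hgyz y z)).
  by apply: eq_bigr => p _; rewrite Fb mulrA.
have hHz : forall y z, balop (fun a b => H a (b * y) z).
  move=> y z; split => [x z1 z2|x1 x2 z'|x a z']; first by rewrite mulrDl H2.
    by rewrite H1.
  by rewrite h3 mulrA.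
pose Z x y z := \sum_(p <- T x) H p.1 (p.2 * y) z.
have zz0 : forall X Y W, \sum_(c <- D X) Z c.1 (c.2 * Y) W = H X Y W.
  move=> X Y W.
  have hg : balop (fun a b => H a b W).
    by split => [x z1 z2|x1 x2 z'|x a z']; [rewrite H2|rewrite H1|rewrite h3].
  by rewrite -(K hg X Y).
have zz1 : forall a x y z, Z (t a * x) y z = Z x (s a * y) z.
  move=> a x y z; rewrite /Z (T_tl (hHz y z)).
  by apply: eq_bigr => p _; rewrite mulrA.
have zz2 : forall a x y z, Z x (t a * y) z = Z x y (s a * z).
  move=> a x y z; rewrite /Z.
  transitivity (\sum_(p <- T x) H p.1 (p.2 * t a * y) z).
    by apply: eq_bigr => p _; rewrite mulrA.
  rewrite (T_tak (hHz y z)); by apply: eq_bigr => p _; rewrite h1.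
have Z1 : forall x1 x2 y z, Z (x1 + x2) y z = Z x1 y z + Z x2 y z.
  by move=> x1 x2 y z; rewrite /Z (T_add (hHz y z)).
have Z2 : forall x y1 y2 z, Z x (y1 + y2) z = Z x y1 z + Z x y2 z.
  by move=> *; rewrite /Z -big_split; apply: eq_bigr => p _; rewrite mulrDr H2.
have Z3 : forall x y z1 z2, Z x y (z1 + z2) = Z x y z1 + Z x y z2.
  by move=> *; rewrite /Z -big_split; apply: eq_bigr => p _; rewrite H3.
have hZx : forall x, balL (Z x).
  by move=> x; split => [y z1 z2|y1 y2 z|y a z]; [rewrite Z3|rewrite Z2|rewrite zz2].
pose K3 w (a b c : U) := \sum_(q <- D w) Z a (b * q.1) (c * q.2).
have hK3 : forall w, balL3 s t (K3 w).
  move=> w; split; rewrite /K3.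
  - by move=> *; rewrite -big_split; apply: eq_bigr => q _; rewrite Z1.
  - by move=> *; rewrite -big_split; apply: eq_bigr => q _; rewrite mulrDl Z2.
  - by move=> *; rewrite -big_split; apply: eq_bigr => q _; rewrite mulrDl Z3.
  - by move=> *; apply: eq_bigr => q _; rewrite zz1 mulrA.
  - by move=> *; apply: eq_bigr => q _; rewrite -mulrA zz2 mulrA.
pose Phi x y := \sum_(d <- D y) Z x d.1 d.2.
have hPhi : balL Phi.
  split => [x y1 y2|x1 x2 y|x a y]; rewrite /Phi.
  - exact: (Dadd HB (hZx x)).
  - by rewrite -big_split; apply: eq_bigr => d _; rewrite Z1.
  rewrite (Dsl HB (hZx x)); apply: eq_bigr => d _; by rewrite zz1.
transitivity (\sum_(w <- T u) \sum_(r <- D w.1) Phi r.1 (r.2 * w.2)); last first.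
  rewrite (TS hPhi) /Phi (Done HB (hZx u)) /Z; apply: eq_bigr => w0 _.
  by rewrite /H mulr1; under eq_bigr do rewrite mulr1.
apply: eq_bigr => w0 _.
transitivity (\sum_(r <- D w0.1) \sum_(c <- D r.1) K3 w0.2 c.1 c.2 r.2).
  transitivity (\sum_(q <- D w0.2) \sum_(r <- D w0.1) \sum_(c <- D r.1)
      Z c.1 (c.2 * q.1) (r.2 * q.2)).
    by apply: eq_bigr => q _; rewrite h0; apply: eq_bigr => r _; rewrite zz0.
  rewrite exchange_big /=; apply: eq_bigr => r _; by rewrite exchange_big.
rewrite (coass HB _ (hK3 w0.2)); apply: eq_bigr => r _.
rewrite /Phi /K3 (Dmul HB (hZx r.1)) //.
Qed.
End Vs.
End Tri.

End Hopf.


Section Main.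
Variables (k : comNzRingType) (A U V : algType k).
Variables (sU tU : A -> U) (DU : U -> seq (U * U)) (eU : U -> A).
Variables (sV tV : A -> V) (DV : V -> seq (V * V)) (eV : V -> A).
Variable pi : U -> V.
Hypothesis HBU : is_left_bialgebroid sU tU DU eU.
Hypothesis HinjU : forall l1 l2, teqL sU tU (galois_map DU l1) (galois_map DU l2) -> teqop tU l1 l2.
Hypothesis HsurjU : forall m, exists l, teqL sU tU (galois_map DU l) m.
Hypothesis HBV : is_left_bialgebroid sV tV DV eV.
Hypothesis pi_add : forall u v, pi (u + v) = pi u + pi v.
Hypothesis pi_mul : forall u v, pi (u * v) = pi u * pi v.
Hypothesis pi_one : pi 1 = 1.
Hypothesis pi_s : forall a, pi (sU a) = sV a.
Hypothesis pi_e : forall u, eV (pi u) = eU u.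

Local Notation B := (left_hopf_kernel tU DU sV pi).
Local Notation T := (transl sU tU DU).

Definition balK (M : zmodType) (f : U -> V -> M) :=
  balanced2 (fun x a => tU a * x) (fun a y => sV a * y) f.

Section K.
Variables (M : zmodType) (f : U -> V -> M).
Hypothesis hf : balK f.
Lemma kL1 x1 x2 y : f (x1 + x2) y = f x1 y + f x2 y. Proof. by case: hf. Qed.
Lemma kL2 x y1 y2 : f x (y1 + y2) = f x y1 + f x y2. Proof. by case: hf. Qed.
Lemma kLb a x y : f (tU a * x) y = f x (sV a * y). Proof. by case: hf. Qed.
Lemma fpi : balL sU tU (fun x y => f x (pi y)).
Proof.
split => [x y1 y2|x1 x2 y|x a y]; first by rewrite pi_add kL2.
  by rewrite kL1.
by rewrite kLb pi_mul pi_s.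
Qed.
End K.

Lemma BE b : B b -> forall (M : zmodType) (f : U -> V -> M), balK f ->
  \sum_(q <- DU b) f q.1 (pi q.2) = f b 1.
Proof. move=> hb M f hf; have := hb M f hf; by rewrite /tsum big_map big_seq1. Qed.
Lemma BI b : (forall (M : zmodType) (f : U -> V -> M), balK f ->
  \sum_(q <- DU b) f q.1 (pi q.2) = f b 1) -> B b.
Proof. move=> h M f hf; rewrite /tsum big_map big_seq1; exact: h. Qed.

Lemma balte : balL sU tU (fun x y => tU (eU y) * x).
Proof.
split => [x y1 y2|x1 x2 y|x a y]; first by rewrite (e_add HBU) (t_add HBU) mulrDl.
  by rewrite mulrDr.
have := e_lin HBU a 1 y; rewrite (t_one HBU) mul1r mulr1 => ->.
by rewrite (t_mul HBU) mulrA.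
Qed.

Lemma te1 : tU (eU 1) = 1.
Proof. by have := counitr HBU 1; rewrite (Done HBU balte) mulr1. Qed.

Lemma Bcomm b a : B b -> tU a * b = b * tU a.
Proof.
move=> hb.
pose phi (x : U) (y : V) := tU (eV (y * sV a)) * x.
have hphi : balK phi.
  split => [x y1 y2|x1 x2 y|x c y]; rewrite /phi.
  - by rewrite mulrDl (e_add HBV) (t_add HBU) mulrDl.
  - by rewrite mulrDr.
  have := e_lin HBV c 1 (y * sV a); rewrite (t_one HBV) mul1r mulr1 !mulrA => ->.
  by rewrite (t_mul HBU).
have h := BE hb hphi; rewrite /phi mul1r -pi_s pi_e in h.
have := e_lin HBU a 1 1; rewrite (t_one HBU) mul1r !mulr1 => he.
rewrite he (t_mul HBU) te1 mul1r in h.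
rewrite -h -{1}(counitr HBU (b * tU a)) (Dtr HBU balte).
apply: eq_bigr => q _; by rewrite (e_bal HBU) -pi_mul pi_e.
Qed.

Lemma B0 : B 0.
Proof.
apply: BI => M f hf; rewrite (D0 HBU (fpi hf)).
by rewrite (ga0 (g := fun x => f x 1)) // => x1 x2; rewrite (kL1 hf).
Qed.

Lemma B1 : B 1.
Proof. by apply: BI => M f hf; rewrite (Done HBU (fpi hf)) pi_one. Qed.

Lemma Bsub b b' : B b -> B b' -> B (b - b').
Proof.
move=> hb hb'; apply: BI => M f hf; rewrite (Dsub HBU (fpi hf)) (BE hb hf) (BE hb' hf).
by rewrite (gaB (g := fun x => f x 1)) // => x1 x2; rewrite (kL1 hf).
Qed.

Lemma Bmul b b' : B b -> B b' -> B (b * b').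
Proof.
move=> hb hb'; apply: BI => M f hf; rewrite (Dmul HBU (fpi hf)) /=.
pose g x y := \sum_(q <- DU b') f (x * q.1) (y * pi q.2).
have hg : balK g.
  split => [x y1 y2|x1 x2 y|x a y]; rewrite /g.
  - by rewrite -big_split; apply: eq_bigr => q _; rewrite mulrDl (kL2 hf).
  - by rewrite -big_split; apply: eq_bigr => q _; rewrite mulrDl (kL1 hf).
  - by apply: eq_bigr => q _; rewrite -mulrA (kLb hf) mulrA.
transitivity (\sum_(p <- DU b) g p.1 (pi p.2)).
  by apply: eq_bigr => p _; apply: eq_bigr => q _; rewrite pi_mul.
rewrite (BE hb hg) /g.
have hh : balK (fun x y => f (b * x) y).
  split => [x y1 y2|x1 x2 y|x a y]; first by rewrite (kL2 hf).
    by rewrite mulrDr (kL1 hf).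
  by rewrite mulrA -(Bcomm a hb) -mulrA (kLb hf).
rewrite -(BE hb' hh); apply: eq_bigr => q _; by rewrite mul1r.
Qed.

Lemma Bs a : B (sU a).
Proof.
apply: BI => M f hf.
have hh : balL sU tU (fun x y => f (sU a * x) (pi y)) := balL_sl HBU (fpi hf) a.
by rewrite -[sU a]mulr1 (Dsl HBU (fpi hf)) (Done HBU hh) pi_one.
Qed.


Local Notation hact := (hact sU tU DU).

Lemma balb b : (forall a, tU a * b = b * tU a) -> balop tU (fun x y => x * b * y).
Proof.
move=> hc; split => [x y1 y2|x1 x2 y|x a y]; first by rewrite mulrDr.
  by rewrite !mulrDl.
by rewrite -(mulrA x) hc !mulrA.
Qed.

Lemma gb b : B b -> balop tU (fun x y => x * b * y).
Proof. by move=> hb; apply: balb => a; apply: Bcomm. Qed.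

Lemma hact_wd u b l1 l2 : B b ->
  teqL sU tU (galois_map DU l1) [:: (u, 1)] ->
  teqL sU tU (galois_map DU l2) [:: (u, 1)] ->
  \sum_(p <- l1) p.1 * b * p.2 = \sum_(p <- l2) p.1 * b * p.2.
Proof.
move=> hb h1 h2; apply: (INJ HinjU _ (gb hb)) => M f hf.
by rewrite -!(gmE DU f) (h1 M f hf) (h2 M f hf).
Qed.

Lemma hact_add u v b : B b -> hact (u + v) b = hact u b + hact v b.
Proof. by move=> hb; rewrite /hact (T_add HinjU HsurjU (gb hb)). Qed.

Lemma hact_scale (c : k) u b : B b -> hact (c *: u) b = c *: hact u b.
Proof.
move=> hb; rewrite /hact (T_scale HBU HinjU HsurjU (gb hb)) scaler_sumr.
by apply: eq_bigr => p _; rewrite !scalerAl.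
Qed.

Lemma hact_addr u b b' : hact u (b + b') = hact u b + hact u b'.
Proof. by rewrite /hact -big_split; apply: eq_bigr => p _; rewrite mulrDr mulrDl. Qed.

Lemma hact_one b : B b -> hact 1 b = b.
Proof. by move=> hb; rewrite /hact (T_one HBU HinjU HsurjU (gb hb)) mul1r mulr1. Qed.

Lemma hact_mulu u v b : B b -> hact (u * v) b = hact u (hact v b).
Proof.
move=> hb; rewrite /hact (T_mul HBU HinjU HsurjU (gb hb)).
apply: eq_bigr => p _; rewrite mulr_sumr mulr_suml.
by apply: eq_bigr => q _; rewrite !mulrA.
Qed.

Lemma hact_s u a b : B b -> hact (u * sU a) b = hact u (sU a * b).
Proof.
move=> hb; rewrite /hact (T_sr HBU HinjU HsurjU (gb hb)).
by apply: eq_bigr => p _; rewrite !mulrA.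
Qed.

Lemma hact_t u a b : B b -> hact (u * tU a) b = hact u (b * sU a).
Proof.
move=> hb; rewrite /hact (T_tr HBU HinjU HsurjU (gb hb)).
by apply: eq_bigr => p _; rewrite !mulrA.
Qed.

Lemma hact_unit u : hact u 1 = sU (eU u).
Proof.
rewrite /hact -(T_eps HBU HsurjU u).
by apply: eq_bigr => p _; rewrite mulr1.
Qed.


Lemma hact_mul u b b' : B b -> B b' ->
  hact u (b * b') = \sum_(r <- DU u) hact r.1 b * hact r.2 b'.
Proof.
move=> hb hb'.
have hc' := fun a => Bcomm a hb'.
have C1 : forall (M : zmodType) (f : U -> U -> M), balL sU tU f ->
    \sum_(r <- DU u) f r.1 (hact r.2 b') =
    \sum_(w <- T u) \sum_(c <- DU w.1) f c.1 (c.2 * b' * w.2).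
  move=> M f hf.
  have := IV HBU HinjU HsurjU (F := fun x y z => f x (y * b' * z)) _ _ _ _ _ u.
  move=> ->.
  - apply: eq_bigr => r _; rewrite /hact (ga_sum (g := f r.1)) //.
    by move=> y1 y2; rewrite (fL2 hf).
  - by move=> *; rewrite (fL1 hf).
  - by move=> *; rewrite !mulrDl (fL2 hf).
  - by move=> *; rewrite !mulrDr (fL2 hf).
  - by move=> *; rewrite (fLb hf) !mulrA.
  - by move=> a x y z /=; rewrite -(mulrA y) hc' !mulrA.
pose l1 := flatten [seq [seq (p.1, p.2 * hact r.2 b') | p <- T r.1] | r <- DU u].
pose l2 := [seq (w.1, b' * w.2) | w <- T u].
have hH : forall (M : zmodType) (f : U -> U -> M), balL sU tU f ->
    \sum_(p <- l1) \sum_(q <- DU p.1) f q.1 (q.2 * p.2) =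
    \sum_(p <- l2) \sum_(q <- DU p.1) f q.1 (q.2 * p.2).
  move=> M f hf; rewrite /l1 /l2 sum_fm big_map /=.
  transitivity (\sum_(r <- DU u) f r.1 (hact r.2 b')).
    by apply: eq_bigr => r _; rewrite (TSz HsurjU hf).
  rewrite (C1 M f hf); apply: eq_bigr => w _; apply: eq_bigr => c _; by rewrite !mulrA.
have h := INJ HinjU hH (gb hb).
rewrite /l1 /l2 sum_fm big_map /= in h.
transitivity (\sum_(w <- T u) w.1 * b * (b' * w.2)).
  by rewrite /hact; apply: eq_bigr => w _; rewrite !mulrA.
rewrite -h; apply: eq_bigr => r _; rewrite /hact mulr_suml.
by apply: eq_bigr => p _; rewrite !mulrA.
Qed.

Lemma Bhact u b : B b -> B (hact u b).
Proof.
move=> hb; apply: BI => M f hf.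
have hf' := fpi hf.
have hc := fun a => Bcomm a hb.
rewrite /hact (Dsum HBU hf') (ga_sum (g := fun x => f x 1)); last first.
  by move=> x1 x2; rewrite (kL1 hf).
transitivity (\sum_(w <- T u) \sum_(r <- DU w.1) \sum_(q <- DU w.2)
    f (r.1 * b * q.1) (pi (r.2 * q.2))).
  apply: eq_bigr => w _.
  pose G x y := \sum_(q <- DU w.2) f (x * q.1) (pi (y * q.2)).
  have hG : balL sU tU G.
    split => [x y1 y2|x1 x2 y|x a y]; rewrite /G.
    - by rewrite -big_split; apply: eq_bigr => q _; rewrite mulrDl pi_add (kL2 hf).
    - by rewrite -big_split; apply: eq_bigr => q _; rewrite mulrDl (kL1 hf).
    - by apply: eq_bigr => q _; rewrite -mulrA (kLb hf) !pi_mul pi_s mulrA.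
  rewrite (Dmul HBU hf') /=.
  transitivity (\sum_(p <- DU (w.1 * b)) G p.1 p.2); first by [].
  rewrite (Dmul HBU hG) /G /= exchange_big /=.
  pose Phi x y := \sum_(r <- DU w.1) \sum_(q <- DU w.2) f (r.1 * x * q.1) (pi r.2 * y * pi q.2).
  have hPhi : balK Phi.
    split => [x y1 y2|x1 x2 y|x a y]; rewrite /Phi.
    - rewrite -big_split; apply: eq_bigr => r _; rewrite -big_split.
      by apply: eq_bigr => q _; rewrite mulrDr mulrDl (kL2 hf).
    - rewrite -big_split; apply: eq_bigr => r _; rewrite -big_split.
      by apply: eq_bigr => q _; rewrite mulrDr mulrDl (kL1 hf).
    pose psi al be := \sum_(q <- DU w.2) f (al * x * q.1) (pi be * y * pi q.2).
    have hpsi : balL sU tU psi.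
      split => [al b1 b2|a1 a2 be|al c be]; rewrite /psi.
      - by rewrite -big_split; apply: eq_bigr => q _; rewrite pi_add !mulrDl (kL2 hf).
      - by rewrite -big_split; apply: eq_bigr => q _; rewrite !mulrDl (kL1 hf).
      - by apply: eq_bigr => q _; rewrite -!mulrA (kLb hf) pi_mul pi_s !mulrA.
    transitivity (\sum_(r <- DU w.1) psi (r.1 * tU a) r.2).
      by apply: eq_bigr => r _; rewrite /psi; apply: eq_bigr => q _; rewrite !mulrA.
    rewrite (Dtak HBU hpsi); apply: eq_bigr => r _; rewrite /psi.
    by apply: eq_bigr => q _; rewrite pi_mul pi_s !mulrA.
  have := BE hb hPhi; rewrite /Phi => h.
  transitivity (\sum_(c <- DU b) \sum_(r <- DU w.1) \sum_(q <- DU w.2)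
      f (r.1 * c.1 * q.1) (pi r.2 * pi c.2 * pi q.2)).
    apply: eq_bigr => c _; apply: eq_bigr => r _; apply: eq_bigr => q _.
    by rewrite !pi_mul.
  rewrite h; apply: eq_bigr => r _; apply: eq_bigr => q _; by rewrite mulr1 pi_mul.
pose F x y z := \sum_(r <- DU x) f (r.1 * b * y) (pi (r.2 * z)).
have hFx : forall y z, balL sU tU (fun al be => f (al * b * y) (pi (be * z))).
  move=> y z; split => [al b1 b2|a1 a2 be|al c be].
  - by rewrite mulrDl pi_add (kL2 hf).
  - by rewrite !mulrDl (kL1 hf).
  - by rewrite -!mulrA (kLb hf) !pi_mul pi_s !mulrA.
have := V5 HBU HinjU HsurjU (F := F) _ _ _ _ _ u; rewrite /F.
- move=> h.
  transitivity (\sum_(w <- T u) \sum_(q <- DU w.2) \sum_(r <- DU w.1)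
      f (r.1 * b * q.1) (pi (r.2 * q.2))).
    by apply: eq_bigr => w _; rewrite exchange_big.
  rewrite h.
  apply: eq_bigr => w0 _.
  have := TS HsurjU (balL_lr hf' (b * w0.2)) w0.1; rewrite pi_one mulrA => <-.
  by apply: eq_bigr => p _; apply: eq_bigr => r _; rewrite !mulrA.
- by move=> x1 x2 y z; rewrite (Dadd HBU (hFx y z)).
- by move=> *; rewrite -big_split; apply: eq_bigr => r _; rewrite mulrDr (kL1 hf).
- by move=> *; rewrite -big_split; apply: eq_bigr => r _; rewrite mulrDr pi_add (kL2 hf).
- move=> a x y z; rewrite (Dtr HBU (hFx y z)).
  by apply: eq_bigr => r _; rewrite !mulrA.
move=> a x y z.
transitivity (\sum_(r <- DU x) f (r.1 * tU a * (b * y)) (pi (r.2 * z))).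
  by apply: eq_bigr => r _; rewrite !mulrA -(mulrA _ b) -hc !mulrA.
have hpsi : balL sU tU (fun al be => f (al * (b * y)) (pi (be * z))).
  split => [al b1 b2|a1 a2 be|al c be].
  - by rewrite mulrDl pi_add (kL2 hf).
  - by rewrite !mulrDl (kL1 hf).
  - by rewrite -!mulrA (kLb hf) !pi_mul pi_s !mulrA.
rewrite (Dtak HBU hpsi); apply: eq_bigr => r _; by rewrite !mulrA.
Qed.

End Main.

Theorem lemma2p6 (k : comNzRingType) (A U V : algType k)
  (sU tU : A -> U) (DU : U -> seq (U * U)) (eU : U -> A)
  (sV tV : A -> V) (DV : V -> seq (V * V)) (eV : V -> A)
  (pi : U -> V) :
  is_left_hopf_algebroid sU tU DU eU ->
  is_left_hopf_algebroid sV tV DV eV ->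
  is_bialgebroid_morphism sU tU DU eU sV tV DV eV pi ->
  (forall v : V, exists u : U, pi u = v) ->
  let B := left_hopf_kernel tU DU sV pi in
  (* (i) B is an A-subring of U with unit map sU, commuting with tU(A) *)
  [/\ [/\ B 0, B 1,
          forall b b', B b -> B b' -> B (b - b') &
          forall b b', B b -> B b' -> B (b * b')],
      forall a, B (sU a) &
      forall a b, B b -> tU a * b = b * tU a] /\
  (* (ii) u -> b := u_+ b u_- is a well-defined left U-module-algebra action *)
  [/\ forall u b l1 l2, B b ->
        teqL sU tU (galois_map DU l1) [:: (u, 1)] ->
        teqL sU tU (galois_map DU l2) [:: (u, 1)] ->
        \sum_(p <- l1) p.1 * b * p.2 = \sum_(p <- l2) p.1 * b * p.2,
      forall u b, B b -> B (hact sU tU DU u b),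
      [/\ forall u v b, B b ->
            hact sU tU DU (u + v) b = hact sU tU DU u b + hact sU tU DU v b,
          forall (c : k) u b, B b -> hact sU tU DU (c *: u) b = c *: hact sU tU DU u b,
          forall u b b', B b -> B b' ->
            hact sU tU DU u (b + b') = hact sU tU DU u b + hact sU tU DU u b',
          forall b, B b -> hact sU tU DU 1 b = b &
          forall u v b, B b ->
            hact sU tU DU (u * v) b = hact sU tU DU u (hact sU tU DU v b)],
      (* descends to |>U<| (x)_{A^e} >B<| *)
      [/\ forall u a b, B b -> hact sU tU DU (u * sU a) b = hact sU tU DU u (sU a * b) &
          forall u a b, B b -> hact sU tU DU (u * tU a) b = hact sU tU DU u (b * sU a)] &
      [/\ forall u, hact sU tU DU u 1 = sU (eU u) &
          forall u b b', B b -> B b' ->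
            hact sU tU DU u (b * b') =
            \sum_(p <- DU u) hact sU tU DU p.1 b * hact sU tU DU p.2 b']].
Proof.
move=> [HBU HinjU HsurjU] [HBV _ _] [[pa ps pm p1] pis pit pie _] _ B.
split; split.
- split.
  + exact: (B0 HBU pa pm pis).
  + exact: (B1 HBU pa pm p1 pis).
  + move=> b b'; exact: (Bsub HBU pa pm pis).
  + move=> b b'; exact: (Bmul HBU HBV pa pm pis pie).
- move=> a; exact: (Bs HBU pa pm p1 pis a).
- move=> a b hb; exact: (Bcomm HBU HBV pm pis pie a hb).
- move=> u b l1 l2; exact: (hact_wd HBU HinjU HBV pm pis pie).
- move=> u b; exact: (Bhact HBU HinjU HsurjU HBV pa pm p1 pis pie u).
- split.
  + move=> u v b; exact: (hact_add HBU HinjU HsurjU HBV pm pis pie u v).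
  + move=> c u b; exact: (hact_scale HBU HinjU HsurjU HBV pm pis pie c u).
  + move=> u b b' _ _; exact: hact_addr.
  + move=> b; exact: (hact_one HBU HinjU HsurjU HBV pm pis pie).
  + move=> u v b; exact: (hact_mulu HBU HinjU HsurjU HBV pm pis pie u v).
- split.
  + move=> u a b; exact: (hact_s HBU HinjU HsurjU HBV pm pis pie u a).
  + move=> u a b; exact: (hact_t HBU HinjU HsurjU HBV pm pis pie u a).
- split.
  + move=> u; exact: (hact_unit HBU HsurjU u).
  + move=> u b b'; exact: (hact_mul HBU HinjU HsurjU HBV pm pis pie u).
Qed.
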